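(* Let $G=H\langle a\rangle$ be a group, where $H$ is a normal abelian subgroup of $G$. Then $a$ is an almost right Engel element of $G$ if and only if it is an almost left Engel element of $G$. In that case $\mathcal L(a)=\mathcal R(a)$.
   Context: Commutators: $[x,y]=x^{-1}y^{-1}xy$, left-normed, and $[x,{}_n\,y]=[x,y,\dots,y]$ with $y$ repeated $n$ times. A right Engel sink of $g\in G$ is a set $S$ such that for every $x\in G$ one has $[g,{}_n\,x]\in S$ for all sufficiently large $n$; a left Engel sink of $g$ is a set $S$ such that for every $x\in G$ one has $[x,{}_n\,g]\in S$ for all sufficiently large $n$. The element $g$ is almost right (resp. left) Engel if it has a finite right (resp. left) Engel sink; in that case $\mathcal R(g)$ (resp. $\mathcal L(g)$) denotes the minimal such finite sink. *)

(* Defs.v *)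
(* abstract (possibly infinite) groups via mathcomp's
   boot/monoid.v [groupType]; commutator [~ x, y] = x^-1 * (y^-1 * (x * y)). *)
From mathcomp Require Import all_boot.

Set Implicit Arguments.
Unset Strict Implicit.
Unset Printing Implicit Defensive.

Local Open Scope group_scope.

Section Engel.
Variable G : groupType.

Fixpoint engel_comm (x y : G) (n : nat) : G :=
  match n with
  | 0 => x
  | n'.+1 => [~ engel_comm x y n', y]
  end.

Definition finite_set (S : G -> Prop) : Prop :=
  exists l : seq G, forall z, S z -> z \in l.

Definition right_engel_sink (g : G) (S : G -> Prop) : Prop :=
  forall x : G, exists N : nat, forall n, (N <= n)%N -> S (engel_comm g x n).

Definition left_engel_sink (g : G) (S : G -> Prop) : Prop :=
  forall x : G, exists N : nat, forall n, (N <= n)%N -> S (engel_comm x g n).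

Definition almost_right_engel (g : G) : Prop :=
  exists S, finite_set S /\ right_engel_sink g S.

Definition almost_left_engel (g : G) : Prop :=
  exists S, finite_set S /\ left_engel_sink g S.

Definition is_min_right_sink (g : G) (S : G -> Prop) : Prop :=
  [/\ finite_set S, right_engel_sink g S &
      forall S', finite_set S' -> right_engel_sink g S' -> forall z, S z -> S' z].

Definition is_min_left_sink (g : G) (S : G -> Prop) : Prop :=
  [/\ finite_set S, left_engel_sink g S &
      forall S', finite_set S' -> left_engel_sink g S' -> forall z, S z -> S' z].

End Engel.

(* Main.v *)
Require Import Defs.
From mathcomp Require Import all_boot.
Set Implicit Arguments.
Unset Strict Implicit.
Local Open Scope group_scope.

Record hyp (G : groupType) (H : G -> Prop) (a : G) : Prop := Hyp {
  H1_ : H 1;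
  HM_ : forall x y, H x -> H y -> H (x * y);
  HV_ : forall x, H x -> H x^-1;
  Hn_ : forall h g, H h -> H (h ^ g);
  Hab_ : forall x y, H x -> H y -> x * y = y * x;
  HG_ : forall g : G, exists h, exists n : nat,
          H h /\ (g = h * a ^+ n \/ g = h * a ^- n) }.

Lemma engel_add (G : groupType) (x y : G) n m :
  engel_comm x y (n + m) = engel_comm (engel_comm x y n) y m.
Proof. by elim: m => [|m IH]; rewrite ?addn0 // addnS /= IH. Qed.

Lemma engel_S (G : groupType) (x y : G) n :
  engel_comm x y n.+1 = engel_comm [~ x, y] y n.
Proof. by rewrite -add1n engel_add. Qed.

Lemma comm_commute (G : groupType) (h c a : G) :
  commute c a -> [~ h * c, a] = [~ h, a] ^ c.
Proof.
move=> ca; rewrite /commg /conjg !invgM !mulgA.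
by rewrite -(mulgA _ c a) ca !mulgA.
Qed.

Lemma conj_commute (G : groupType) (c a : G) : commute c a -> a ^ c = a.
Proof. by move=> ca; rewrite /conjg -ca mulKg. Qed.

Lemma commute_pow (G : groupType) (a : G) n : commute (a ^+ n) a.
Proof. by apply: commute_sym; apply: commuteX; apply: commute_refl. Qed.

Lemma commute_powV (G : groupType) (a : G) n : commute (a ^- n) a.
Proof. by apply: commute_sym; apply: commuteV; apply: commute_sym; apply: commute_pow. Qed.


Lemma commaH G H a (hy : @hyp G H a) g : H [~ g, a].
Proof.
case: hy => H1 HM HV Hn Hab HG.
have Hc : forall h, H h -> H [~ h, a].
  by move=> h Hh; rewrite /commg; apply: HM; [apply: HV | apply: Hn].
have [h [n [Hh [->|->]]]] := HG g.
- by rewrite comm_commute; [apply: Hn; apply: Hc | exact: commute_pow].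
- by rewrite comm_commute; [apply: Hn; apply: Hc | exact: commute_powV].
Qed.

Lemma commH G H a (hy : @hyp G H a) u g : H u -> H [~ u, g].
Proof.
case: hy => H1 HM HV Hn Hab HG Hu.
by rewrite /commg; apply: HM; [apply: HV | apply: Hn].
Qed.

Lemma engelH G H a (hy : @hyp G H a) u g n : H u -> H (engel_comm u g n).
Proof. by move=> Hu; elim: n => [|n IH] //=; exact: (commH hy). Qed.

Lemma phi_hom G H a (hy : @hyp G H a) u w : H u -> H w ->
  [~ u * w, a] = [~ u, a] * [~ w, a].
Proof.
move=> Hu Hw; have Hc := commH hy a Hu.
have -> : [~ u * w, a] = w^-1 * [~ u, a] * w ^ a.
  by rewrite !commgEl conjMg invgM !mulgA.
by rewrite (Hab_ hy (HV_ hy Hw) Hc) -mulgA -commgEl.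
Qed.

Lemma engel_hom G H a (hy : @hyp G H a) u w n : H u -> H w ->
  engel_comm (u * w) a n = engel_comm u a n * engel_comm w a n.
Proof.
move=> Hu Hw; elim: n => [|n IH] //=.
by rewrite IH (phi_hom hy) //; apply: (engelH hy).
Qed.

Lemma engel_one (G : groupType) (a : G) n : engel_comm 1 a n = 1.
Proof. by elim: n => [|n IH] //=; rewrite IH comm1g. Qed.

Lemma engel_inv G H a (hy : @hyp G H a) u n : H u ->
  engel_comm u^-1 a n = (engel_comm u a n)^-1.
Proof.
move=> Hu; apply/esym/mulg1_eq.
by rewrite -(engel_hom hy) ?mulgV ?engel_one //; apply: (HV_ hy).
Qed.

Lemma engel_conj (G : groupType) (a c u : G) n : commute c a ->
  engel_comm (u ^ c) a n = (engel_comm u a n) ^ c.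
Proof.
move=> ca; elim: n => [|n IH] //=.
by rewrite IH conjRg (conj_commute ca).
Qed.

Definition Cyc (G : groupType) (a z : G) :=
  exists m, (0 < m)%N /\ engel_comm z a m = z.

Lemma Cyc_iter (G : groupType) (a z : G) m j :
  engel_comm z a m = z -> engel_comm z a (m * j) = z.
Proof.
move=> e; elim: j => [|j IH]; first by rewrite muln0.
by rewrite mulnS engel_add e IH.
Qed.

Lemma Cyc_H G H a (hy : @hyp G H a) z : Cyc a z -> H z.
Proof.
case=> m [m0 e]; case: m m0 e => [//|m] _ <- /=; exact: (commaH hy).
Qed.

Lemma Cyc_phi (G : groupType) (a z : G) : Cyc a z -> Cyc a [~ z, a].
Proof.
case=> m [m0 e]; exists m; split => //.
by rewrite -engel_S /= e.
Qed.

Lemma Cyc_engel (G : groupType) (a z : G) k : Cyc a z -> Cyc a (engel_comm z a k).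
Proof. by move=> cz; elim: k => [|k IH] //=; apply: Cyc_phi. Qed.

Lemma Cyc_mul G H a (hy : @hyp G H a) u w : Cyc a u -> Cyc a w -> Cyc a (u * w).
Proof.
move=> cu cw; have Hu := Cyc_H hy cu; have Hw := Cyc_H hy cw.
case: cu => m [m0 em]; case: cw => k [k0 ek].
exists (m * k)%N; split; first by rewrite muln_gt0 m0.
rewrite (engel_hom hy) // Cyc_iter // mulnC Cyc_iter //.
Qed.

Lemma Cyc_inv G H a (hy : @hyp G H a) u : Cyc a u -> Cyc a u^-1.
Proof.
move=> cu; have Hu := Cyc_H hy cu; case: cu => m [m0 em].
by exists m; split => //; rewrite (engel_inv hy) // em.
Qed.

Lemma Cyc_conj (G : groupType) (a c u : G) : commute c a -> Cyc a u -> Cyc a (u ^ c).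
Proof.
move=> ca [m [m0 em]]; exists m; split => //.
by rewrite engel_conj // em.
Qed.

Lemma Cyc1 (G : groupType) (a : G) : Cyc a 1.
Proof. by exists 1%N; split => //=; rewrite comm1g. Qed.

Definition T (G : groupType) (H : G -> Prop) (a : G) n w :=
  H w /\ Cyc a (engel_comm w a n).

Lemma T_mul G H a (hy : @hyp G H a) n u w : T H a n u -> T H a n w -> T H a n (u * w).
Proof.
move=> [Hu cu] [Hw cw]; split; first exact: (HM_ hy).
by rewrite (engel_hom hy) //; apply: (Cyc_mul hy).
Qed.

Lemma T_inv G H a (hy : @hyp G H a) n u : T H a n u -> T H a n u^-1.
Proof.
move=> [Hu cu]; split; first exact: (HV_ hy).
by rewrite (engel_inv hy) //; apply: (Cyc_inv hy).
Qed.

Lemma T_conj G H a (hy : @hyp G H a) n c u : commute c a -> T H a n u -> T H a n (u ^ c).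
Proof.
move=> ca [Hu cu]; split; first exact: (Hn_ hy).
by rewrite engel_conj //; apply: Cyc_conj.
Qed.

Lemma T1 G H a (hy : @hyp G H a) n : T H a n 1.
Proof. by split; [exact: (H1_ hy) | rewrite engel_one; apply: Cyc1]. Qed.

Lemma T_phi G H a (hy : @hyp G H a) n u : T H a n u -> T H a n.-1 [~ u, a].
Proof.
move=> [Hu cu]; split; first exact: (commaH hy).
case: n cu => [|n] /= cu; first exact: Cyc_phi.
by rewrite -engel_S.
Qed.

Lemma T_pow G H a (hy : @hyp G H a) n u k : T H a n u -> T H a n.-1 (u^-1 * u ^ (a ^+ k)).
Proof.
move=> tu; elim: k => [|k IH].
  by rewrite expg0 conjg1 mulVg; apply: T1.
have -> : u^-1 * u ^ (a ^+ k.+1) = (u^-1 * u ^ (a ^+ k)) * [~ u, a] ^ (a ^+ k).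
  by rewrite commgEl conjMg conjVg -conjgM -expgS -[RHS]mulgA mulVKg.
apply: (T_mul hy) => //; apply: (T_conj hy); first exact: commute_pow.
exact: (T_phi hy).
Qed.

Lemma T_neg G H a (hy : @hyp G H a) n u k : T H a n u -> T H a n.-1 (u^-1 * u ^ (a ^- k)).
Proof.
move=> tu; have tu' : T H a n (u ^ (a ^- k)) by apply: (T_conj hy) => //; exact: commute_powV.
have := T_inv hy (T_pow hy k tu').
by rewrite conjgKV invgM invgK.
Qed.

Lemma T_commx G H a (hy : @hyp G H a) n u x : T H a n u -> T H a n.-1 [~ u, x].
Proof.
move=> tu; have Hu := tu.1.
have [h [k [Hh [->|->]]]] := HG_ hy x.
- rewrite commgEl conjgM.
  have -> : u ^ h = u by rewrite /conjg (Hab_ hy Hu Hh) mulKg.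
  exact: (T_pow hy).
- rewrite commgEl conjgM.
  have -> : u ^ h = u by rewrite /conjg (Hab_ hy Hu Hh) mulKg.
  exact: (T_neg hy).
Qed.

Lemma Cyc_left (G : groupType) (a : G) S z : left_engel_sink a S -> Cyc a z -> S z.
Proof.
move=> hS [m [m0 em]]; have [N hN] := hS z.
rewrite -(Cyc_iter N em); apply: hN; exact: leq_pmull.
Qed.

Lemma engel_x' G H a (hy : @hyp G H a) h' u n : H h' -> H u ->
  engel_comm u (h' * a) n = engel_comm u a n.
Proof.
move=> Hh Hu; elim: n => [|n IH] //=; rewrite IH.
have He := engelH hy a n Hu.
rewrite !commgEl conjgM; congr (_ * (_ ^ _)).
by rewrite /conjg (Hab_ hy He Hh) mulKg.
Qed.

Lemma right_left G H a (hy : @hyp G H a) S :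
  right_engel_sink a S -> left_engel_sink a S.
Proof.
move=> hS x.
have [h [c [Hh ca ->]]] : exists h c, [/\ H h, commute c a & x = h * c].
  have [h [k [Hh [->|->]]]] := HG_ hy x.
  - by exists h, (a ^+ k); split => //; exact: commute_pow.
  - by exists h, (a ^- k); split => //; exact: commute_powV.
pose h' := (h^-1) ^ (c * a^-1).
have Hh' : H h' by apply: (Hn_ hy); apply: (HV_ hy).
have [N hN] := hS (h' * a).
exists N.+1 => -[//|n] Nn.
have e : [~ a, h' * a] = [~ h * c, a].
  have -> : [~ a, h' * a] = (h'^-1 ^ a * h') ^ a by rewrite /commg /conjg !invgM !mulgA.
  have e1 : h'^-1 ^ a = h ^ c by rewrite /h' -conjVg invgK -conjgM mulgVK.
  rewrite e1 conjMg /h' -!conjgM mulgVK comm_commute // commgEl conjMg.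
  rewrite -conjgM -ca conjgM; apply: (Hab_ hy).
  - by apply: (Hn_ hy); apply: (Hn_ hy).
  - by apply: (Hn_ hy); apply: (HV_ hy).
have := hN n.+1 (ltnW Nn).
rewrite engel_S e (engel_x' hy) //; last exact: (commaH hy).
by rewrite -engel_S.
Qed.

Lemma pigeon (G : groupType) (a : G) (S0 : G -> Prop) (l : seq G) :
  (forall z, S0 z -> z \in l) -> left_engel_sink a S0 ->
  forall x, exists N, Cyc a (engel_comm x a N).
Proof.
move=> hl hS x; have [N0 hN] := hS x.
pose s := [seq engel_comm x a (N0 + i) | i <- iota 0 (size l).+1].
have sub : {subset s <= l}.
  by move=> z /mapP [i _ ->]; apply: hl; apply: hN; exact: leq_addr.
have nu : ~~ uniq s.
  apply/negP => us; have := uniq_leq_size us sub.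
  by rewrite size_map size_iota ltnn.
have [i [j [ij js e]]] := uniqPn 1 nu.
rewrite size_map size_iota in js.
rewrite !(nth_map 0%N) ?size_iota ?(ltn_trans ij js) // !nth_iota ?(ltn_trans ij js) // !add0n in e.
exists (N0 + i); exists (j - i)%N; split; first by rewrite subn_gt0.
by rewrite -engel_add -addnA subnKC ?(ltnW ij) // e.
Qed.

Lemma Cyc_right G H a (hy : @hyp G H a) : almost_left_engel a -> right_engel_sink a (Cyc a).
Proof.
move=> [S0 [[l hl] hS]] x.
pose v := [~ a, x].
have Hv : H v by rewrite /v -invgR; apply: (HV_ hy); apply: (commaH hy).
have [N cN] := pigeon hl hS v.
have tj : forall j, T H a (N - j) (engel_comm v x j).
  elim=> [|j IH]; first by rewrite subn0.
  by rewrite subnS /=; apply: (T_commx hy).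
exists N.+1 => -[//|n] Nn.
rewrite engel_S; have [_] := tj n.
by have -> : (N - n = 0)%N by apply/eqP; rewrite subn_eq0.
Qed.

Lemma Cyc_fin G H a (hy : @hyp G H a) : almost_left_engel a -> finite_set (Cyc a).
Proof.
move=> [S0 [[l hl] hS]]; exists l => z cz; apply: hl; exact: Cyc_left cz.
Qed.

Theorem lemma3p1 (G : groupType) (H : G -> Prop) (a : G)
  (H1 : H 1)
  (HM : forall x y, H x -> H y -> H (x * y))
  (HV : forall x, H x -> H x^-1)
  (Hnormal : forall h g, H h -> H (h ^ g))
  (Habelian : forall x y, H x -> H y -> x * y = y * x)
  (HG : forall g : G, exists h, exists n : nat,
          H h /\ (g = h * a ^+ n \/ g = h * a ^- n)) :
  (almost_right_engel a <-> almost_left_engel a) /\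
  (almost_right_engel a ->
     forall S : G -> Prop, is_min_left_sink a S <-> is_min_right_sink a S).
Proof.
have hy : hyp H a by split.
have RL : almost_right_engel a -> almost_left_engel a.
  by move=> [S [fS rS]]; exists S; split => //; exact: (right_left hy).
split.
  split => // hl; exists (Cyc a); split; [exact: (Cyc_fin hy) | exact: (Cyc_right hy)].
move=> /RL hl S; split.
- move=> [fS lS mS]; split => //.
  + move=> x; have [N hN] := Cyc_right hy hl x; exists N => n Nn.
    by apply: (Cyc_left lS); apply: hN.
  + move=> S' fS' rS' z Sz; apply: (mS S') => //; exact: (right_left hy).
- move=> [fS rS mS]; split => //; first exact: (right_left hy).
  move=> S' fS' lS' z Sz; apply: (Cyc_left lS').
  by apply: (mS (Cyc a)) => //; [exact: (Cyc_fin hy) | exact: (Cyc_right hy)].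
Qed.
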